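(* Let $S=\{2N+\frac{2k+1}{3^n} : N,k\in\mathbb{Z},\ n\in\mathbb{N},\ |2k+1|<3^n\}$. Let $G$ be the graph with vertex set $\mathbb{R}$ in which two vertices $a,b\in\mathbb{R}$ are adjacent if and only if $|a-b|\in S$. Then $G$ contains no cycle of odd length; that is, $G$ is bipartite.
   Context: $\mathbb{N}=\{1,2,3,\dots\}$. A cycle of length $m$ in $G$ is a sequence of $m$ distinct vertices $v_1,\dots,v_m$ with $v_i$ adjacent to $v_{i+1}$ for $1\le i<m$ and $v_m$ adjacent to $v_1$. *)

(* Defs.v *)
From Stdlib Require Import Reals ZArith Arith Lia Lra.
Open Scope R_scope.

Definition S_set (x : R) : Prop :=
  exists (N k : Z) (n : nat),
    (1 <= n)%nat /\
    Rabs (2 * IZR k + 1) < 3 ^ n /\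
    x = 2 * IZR N + (2 * IZR k + 1) / 3 ^ n.

Definition adj (a b : R) : Prop := S_set (Rabs (a - b)).

Definition is_cycle (m : nat) (v : nat -> R) : Prop :=
  (1 <= m)%nat /\
  (forall i j, (i < m)%nat -> (j < m)%nat -> v i = v j -> i = j) /\
  (forall i, (i + 1 < m)%nat -> adj (v i) (v (i + 1)%nat)) /\
  adj (v (m - 1)%nat) (v 0%nat).

(* Main.v *)
Require Import Defs.
From Stdlib Require Import Reals ZArith Arith Lia Lra.
Open Scope R_scope.

Definition Q (b : bool) (x : R) : Prop :=
  exists (a : Z) (n : nat), Z.odd a = b /\ x = IZR a / 3 ^ n.

Lemma odd3 : forall p : nat, Z.odd (3 ^ Z.of_nat p) = true.
Proof.
  induction p as [|p IH]; [reflexivity|].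
  rewrite Nat2Z.inj_succ, Z.pow_succ_r; [|lia].
  rewrite Z.odd_mul, IH; reflexivity.
Qed.

Lemma pow3_pos : forall n : nat, 3 ^ n <> 0.
Proof. intro n. apply pow_nonzero. lra. Qed.

Lemma Q_add : forall b c x y, Q b x -> Q c y -> Q (xorb b c) (x + y).
Proof.
  intros b c x y [a [n [Ha Hx]]] [a' [n' [Ha' Hy]]].
  exists (a * 3 ^ Z.of_nat n' + a' * 3 ^ Z.of_nat n)%Z, (n + n')%nat.
  split.
  - rewrite Z.odd_add, !Z.odd_mul, !odd3, Ha, Ha'.
    destruct b, c; reflexivity.
  - subst. rewrite plus_IZR, !mult_IZR, <- !pow_IZR, pow_add.
    field. split; apply pow3_pos.
Qed.

Lemma Q_opp : forall b x, Q b x -> Q b (- x).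
Proof.
  intros b x [a [n [Ha Hx]]]. exists (- a)%Z, n. split.
  - rewrite Z.odd_opp; exact Ha.
  - subst. rewrite opp_IZR. field. apply pow3_pos.
Qed.

Lemma Q_zero_not_true : ~ Q true 0.
Proof.
  intros [a [n [Ha Hx]]].
  assert (IZR a = 0).
  { assert (H3 := pow3_pos n).
    replace (IZR a) with (IZR a / 3 ^ n * 3 ^ n) by (field; exact H3).
    rewrite <- Hx. ring. }
  apply eq_IZR_R0 in H. subst. discriminate.
Qed.

Lemma S_Q : forall x, S_set x -> Q true x.
Proof.
  intros x [N [k [n [Hn [Hk Hx]]]]].
  exists (2 * N * 3 ^ Z.of_nat n + (2 * k + 1))%Z, n. split.
  - rewrite Z.odd_add, !Z.odd_mul, Z.odd_add, Z.odd_mul, odd3. reflexivity.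
  - subst. rewrite !plus_IZR, !mult_IZR, <- pow_IZR.
    field. apply pow3_pos.
Qed.

Lemma adj_Q : forall a b, adj a b -> Q true (b - a).
Proof.
  intros a b H. apply S_Q in H. unfold Rabs in H.
  destruct (Rcase_abs (a - b)).
  - replace (b - a) with (- (a - b)) by ring. exact H.
  - replace (b - a) with (- (a - b)) by ring. apply Q_opp. exact H.
Qed.

Theorem mainTheorem2 :
  forall (m : nat) (v : nat -> R), Nat.Odd m -> ~ is_cycle m v.
Proof.
  intros m v Hm [H1 [_ [Hstep Hlast]]].
  assert (Hind : forall j, (j < m)%nat -> Q (Nat.odd j) (v j - v 0%nat)).
  { induction j as [|j IH]; intros Hj.
    - exists 0%Z, 0%nat. split; [reflexivity|]. simpl. field.
    - assert (Hs := Hstep j ltac:(lia)).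
      apply adj_Q in Hs.
      replace (v (S j) - v 0%nat) with ((v j - v 0%nat) + (v (j + 1)%nat - v j))
        by (replace (j + 1)%nat with (S j) by lia; ring).
      replace (Nat.odd (S j)) with (xorb (Nat.odd j) true).
      + apply Q_add; [apply IH; lia | exact Hs].
      + rewrite Nat.odd_succ, <- Nat.negb_odd. destruct (Nat.odd j); reflexivity. }
  assert (Hl := Hind (m - 1)%nat ltac:(lia)).
  replace (Nat.odd (m - 1)) with false in Hl.
  2:{ destruct Hm as [k Hk]. subst. replace (2 * k + 1 - 1)%nat with (2 * k)%nat by lia.
      rewrite Nat.odd_mul. reflexivity. }
  apply adj_Q in Hlast.
  apply Q_zero_not_true.
  replace 0 with ((v (m - 1)%nat - v 0%nat) + (v 0%nat - v (m - 1)%nat)) by ring.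
  change true with (xorb false true). apply Q_add; assumption.
Qed.
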